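(* Let $G$ be a $P_5$-free graph, let $k\ge 1$, and let $C\subseteq V(G)$ be such that $G[C]$ is connected and contains no clique of size greater than $k$. Let $D\subseteq C$ with $|D|\le k+1$ be such that every vertex of $C$ is in $D$ or has a neighbor in $D$. Let $R\subseteq N(C)$ be such that the vertex set of every connected component of $G[R]$ is a module in $G$. Then $G[R\cup C]$ has a dominating set $\widetilde D$ with $D\subseteq \widetilde D$ and $|\widetilde D\setminus D|\le \max\{k+1,3\}$ (so $|\widetilde D|\le k+1+\max\{k+1,3\}$).
   Context: For $A\subseteq V(G)$, $N(A)$ is the set of vertices outside $A$ with a neighbor in $A$. A dominating set of a graph $F$ is a set $Z\subseteq V(F)$ such that every vertex of $F$ lies in $Z$ or has a neighbor in $Z$. A set $M\subseteq V(G)$ is a module in $G$ if $N(u)\setminus M=N(v)\setminus M$ for all $u,v\in M$. A graph is $P_5$-free if it has no induced path on 5 vertices. *)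

(* Defs.v *)
From mathcomp Require Import all_boot.
Set Implicit Arguments. Unset Strict Implicit. Unset Printing Implicit Defensive.

Section Graphs.
Variables (T : finType) (e : rel T).

Definition simple_graph := symmetric e /\ irreflexive e.

Definition P5_free : Prop :=
  forall f : 'I_5 -> T, injective f ->
    ~ (forall i j : 'I_5, e (f i) (f j) = ((i.+1 == j :> nat) || (j.+1 == i :> nat))).

Definition induced_rel (A : {set T}) : rel T :=
  [rel x y | [&& e x y, x \in A & y \in A]].

Definition connected_induced (A : {set T}) : Prop :=
  forall x y, x \in A -> y \in A -> connect (induced_rel A) x y.

Definition is_clique (Q : {set T}) : Prop :=
  forall x y, x \in Q -> y \in Q -> x != y -> e x y.

Definition nbhd (A : {set T}) : {set T} :=
  [set v | (v \notin A) && [exists u in A, e u v]].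

Definition nbr (u : T) : {set T} := [set w | e u w].

Definition is_module (M : {set T}) : Prop :=
  forall u v, u \in M -> v \in M -> nbr u :\: M = nbr v :\: M.

Definition component (R : {set T}) (x : T) : {set T} :=
  [set y in R | connect (induced_rel R) x y].

Definition dominating_in (S Z : {set T}) : Prop :=
  Z \subset S /\ forall v, v \in S -> v \in Z \/ exists2 z, z \in Z & e z v.

End Graphs.

(* Main.v *)
Require Import Defs.
From mathcomp Require Import all_boot.
From Stdlib Require Import Classical.
Set Implicit Arguments. Unset Strict Implicit. Unset Printing Implicit Defensive.

Section Aux.
Variables (T : finType) (e : rel T).
Hypothesis esym : symmetric e.
Hypothesis eirr : irreflexive e.

Lemma no_p5 (a b c d g : T) : P5_free e ->
  e a b -> e b c -> e c d -> e d g ->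
  ~~ e a c -> ~~ e a d -> ~~ e a g -> ~~ e b d -> ~~ e b g -> ~~ e c g -> False.
Proof.
move=> P5 hab hbc hcd hdg nac nad nag nbd nbg ncg.
have Eab : e a b = true by []. have Eba : e b a = true by rewrite esym.
have Ebc : e b c = true by []. have Ecb : e c b = true by rewrite esym.
have Ecd : e c d = true by []. have Edc : e d c = true by rewrite esym.
have Edg : e d g = true by []. have Egd : e g d = true by rewrite esym.
have Eac : e a c = false by apply/negbTE. have Eca : e c a = false by rewrite esym; apply/negbTE.
have Ead : e a d = false by apply/negbTE. have Eda : e d a = false by rewrite esym; apply/negbTE.
have Eag : e a g = false by apply/negbTE. have Ega : e g a = false by rewrite esym; apply/negbTE.
have Ebd : e b d = false by apply/negbTE. have Edb : e d b = false by rewrite esym; apply/negbTE.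
have Ebg : e b g = false by apply/negbTE. have Egb : e g b = false by rewrite esym; apply/negbTE.
have Ecg : e c g = false by apply/negbTE. have Egc : e g c = false by rewrite esym; apply/negbTE.
have ab : a != b by apply/eqP => H; move: hab; rewrite H eirr.
have ac : a != c by apply/eqP => H; move: Ead; rewrite H Ecd.
have ad : a != d by apply/eqP => H; move: Eag; rewrite H Edg.
have ag : a != g by apply/eqP => H; move: Ead; rewrite H Egd.
have bc : b != c by apply/eqP => H; move: hbc; rewrite H eirr.
have bd : b != d by apply/eqP => H; move: Ebg; rewrite H Edg.
have bg : b != g by apply/eqP => H; move: Eba; rewrite H Ega.
have cd : c != d by apply/eqP => H; move: hcd; rewrite H eirr.
have cg : c != g by apply/eqP => H; move: Ecb; rewrite H Egb.
have dg : d != g by apply/eqP => H; move: hdg; rewrite H eirr.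
apply: (P5 (fun i : 'I_5 => nth a [:: a; b; c; d; g] i)).
  move=> [[|[|[|[|[|i]]]]] Hi] [[|[|[|[|[|j]]]]] Hj] //= H; try (by apply/val_inj);
  exfalso; move: H; apply/eqP; by rewrite ?ab ?ac ?ad ?ag ?bc ?bd ?bg ?cd ?cg ?dg // eq_sym ?ab ?ac ?ad ?ag ?bc ?bd ?bg ?cd ?cg ?dg.
move=> [[|[|[|[|[|i]]]]] Hi] [[|[|[|[|[|j]]]]] Hj] //=;
  by rewrite ?eirr ?Eab ?Eba ?Ebc ?Ecb ?Ecd ?Edc ?Edg ?Egd ?Eac ?Eca ?Ead ?Eda ?Eag ?Ega ?Ebd ?Edb ?Ebg ?Egb ?Ecg ?Egc.
Qed.

Lemma induced_sym (A : {set T}) : symmetric (induced_rel e A).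
Proof. by move=> x y; rewrite /induced_rel /= esym (andbC (x \in A)). Qed.

Fixpoint ball (S : {set T}) (r : T) (n : nat) : {set T} :=
  if n is n'.+1 then ball S r n' :|: [set y in S | [exists z in ball S r n', e z y]]
  else [set r].

Lemma ball0 (S : {set T}) r : ball S r 0 = [set r].
Proof. by []. Qed.

Lemma ballS (S : {set T}) r n y : (y \in ball S r n.+1) =
  (y \in ball S r n) || ((y \in S) && [exists z in ball S r n, e z y]).
Proof. by rewrite /= in_setU inE. Qed.

Lemma ball_sub (S : {set T}) r n : r \in S -> ball S r n \subset S.
Proof.
move=> rS; elim: n => [|n IH] /=; first by rewrite sub1set.
apply/subsetP=> y; rewrite ballS => /orP[/(subsetP IH)//|/andP[]//].
Qed.

Lemma ball_mono (S : {set T}) r n m : n <= m -> ball S r n \subset ball S r m.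
Proof.
elim: m => [|m IH]; first by rewrite leqn0 => /eqP ->.
rewrite leq_eqVlt => /orP[/eqP -> //|]; rewrite ltnS => /IH.
move=> /subset_trans; apply; exact: subsetUl.
Qed.

Lemma ball_edge (S : {set T}) r n a b : a \in ball S r n -> b \in S -> e a b -> b \in ball S r n.+1.
Proof.
move=> aB bS eab; rewrite ballS bS /=; apply/orP; right; apply/existsP; exists a.
by rewrite aB eab.
Qed.

Lemma ball_pred (S : {set T}) r n a : a \in ball S r n.+1 -> a \notin ball S r n ->
  exists2 b, b \in ball S r n & e b a.
Proof.
rewrite ballS => /orP[->//|/andP[_ /existsP[z /andP[zB eza]]]] _.
by exists z.
Qed.

Lemma ball_far (S : {set T}) r n a b : r \in S -> a \in ball S r n -> b \notin ball S r n.+1 ->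
  b \in S -> ~~ e a b.
Proof. by move=> rS aB nb bS; apply/negP => eab; move: nb; rewrite (ball_edge aB bS eab). Qed.

Lemma ball_pred2 (S : {set T}) r n a : r \in S -> a \in ball S r n.+2 -> a \notin ball S r n.+1 ->
  exists b, [/\ b \in ball S r n.+1, b \notin ball S r n & e b a].
Proof.
move=> rS aB naB; have [b bB eba] := ball_pred aB naB.
exists b; split => //; apply/negP => bB'.
move: naB; rewrite (ball_edge bB' _ eba) //.
exact: (subsetP (ball_sub n.+2 rS)).
Qed.

Lemma ball_path (S : {set T}) r p x n : x \in ball S r n -> path (induced_rel e S) x p ->
  last x p \in ball S r (n + size p).
Proof.
elim: p x n => [|y p IH] x n /=; first by rewrite addn0.
move=> xB /andP[/and3P[exy _ yS] pth].
rewrite -addSnnS; apply: IH pth; exact: ball_edge xB yS exy.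
Qed.

Lemma ball_conn (S : {set T}) r : r \in S -> connected_induced e S -> S \subset ball S r #|T|.
Proof.
move=> rS cS; apply/subsetP => a aS.
move: (cS r a rS aS) => /connectP[p pth ->].
case/shortenP: pth => p' pth' up _.
have := ball_path (n := 0) (set11 r) pth'; rewrite add0n => H.
apply: (subsetP (ball_mono S r _)) H.
have := max_card (mem (r :: p')).
by rewrite (card_uniqP up) /= => /ltnW.
Qed.

Lemma noncut (S : {set T}) r m w : r \in S -> S \subset ball S r m.+1 -> w \in S ->
  w \notin ball S r m -> connected_induced e (S :\ w).
Proof.
move=> rS Sm wS wm.
have inSw : forall n a, n <= m -> a \in ball S r n -> a \in S :\ w.
  move=> n a nm aB; rewrite !inE (subsetP (ball_sub n rS)) // andbT.
  apply/eqP => aw; move: wm; rewrite -aw (subsetP (ball_mono S r nm)) //.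
have sub : forall n, n <= m -> forall a, a \in ball S r n ->
    connect (induced_rel e (S :\ w)) r a.
  elim=> [|n IH] Hn a.
    by rewrite /= inE => /eqP ->; exact: connect0.
  rewrite ballS => /orP[aB|/andP[aS /existsP[z /andP[zB eza]]]].
    exact: IH (ltnW Hn) a aB.
  apply: connect_trans (IH (ltnW Hn) z zB) (connect1 _).
  rewrite /induced_rel /= eza (inSw n z (ltnW Hn) zB) (inSw n.+1 a Hn) //.
  exact: ball_edge zB aS eza.
have rc : forall a, a \in S :\ w -> connect (induced_rel e (S :\ w)) r a.
  move=> a aSw; have aS : a \in S by move: aSw; rewrite inE => /andP[].
  have aB := subsetP Sm a aS.
  case aBm: (a \in ball S r m); first exact: sub m (leqnn m) a aBm.
  have [z zB eza] := ball_pred aB (negbT aBm).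
  apply: connect_trans (sub m (leqnn m) z zB) (connect1 _).
  by rewrite /induced_rel /= eza (inSw m z (leqnn m) zB) aSw.
move=> x y xS yS; apply: connect_trans (rc y yS).
by rewrite (sym_connect_sym (induced_sym (S :\ w))); apply: rc.
Qed.

Lemma far (S : {set T}) r b : r \in S -> connected_induced e S -> b \in S ->
  b \notin ball S r 1 -> exists m v,
  [/\ 1 <= m, S \subset ball S r m.+1, v \in S & v \notin ball S r m].
Proof.
move=> rS cS bS nb.
have ex : exists n, S \subset ball S r n by exists #|T|; exact: ball_conn.
case: (ex_minnP ex) => m0 Hm0 Hmin.
case: m0 Hm0 Hmin => [|[|m]] Hm Hmin.
- by move: nb; rewrite (subsetP (ball_mono S r (leq0n 1)) b (subsetP Hm b bS)).
- by move: nb; rewrite (subsetP Hm b bS).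
have : ~~ (S \subset ball S r m.+1).
  by apply/negP => H; have := Hmin _ H; rewrite ltnn.
case/subsetPn => v vS nv.
by exists m.+1, v; split.
Qed.

Lemma ball1_sym (S : {set T}) r a : r \in S -> a \in S -> a \in ball S r 1 -> r \in ball S a 1.
Proof.
move=> rS aS; rewrite ballS => /orP[|/andP[_ /existsP[z /andP[]]]].
  rewrite ball0 inE => /eqP ->; apply: (subsetP (ball_mono S r (leq0n 1))).
  by rewrite ball0 inE.
rewrite ball0 inE => /eqP -> era.
apply: (ball_edge (n := 0)) => //; first by rewrite ball0 inE.
by rewrite esym.
Qed.

Variables (C R : {set T}).
Hypothesis P5 : P5_free e.
Hypothesis RN : R \subset nbhd e C.
Hypothesis modR : forall x, x \in R -> is_module e (component e R x).

Definition hits (S : {set T}) := forall x, x \in R -> exists2 s, s \in S & e s x.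

Lemma priv (S : {set T}) w : hits S -> ~ hits (S :\ w) ->
  exists x, [/\ x \in R, e w x & forall s, s \in S -> s != w -> ~~ e s x].
Proof.
move=> hS nh; apply: NNPP => H; apply: nh => x xR.
apply: NNPP => H2; apply: H; exists x; split => //.
  have [s sS esx] := hS x xR.
  case: (eqVneq s w) => [<- //|sw]; exfalso; apply: H2; exists s => //.
  by rewrite !inE sw.
move=> s sS sw; apply/negP => esx; apply: H2; exists s => //; by rewrite !inE sw.
Qed.

Lemma RnotC x : x \in R -> x \notin C.
Proof. by move/(subsetP RN); rewrite inE => /andP[]. Qed.

Lemma priv_nonadj u xu xv : u \in C -> xu \in R -> xv \in R -> e u xu -> ~~ e u xv ->
  ~~ e xu xv.
Proof.
move=> uC xuR xvR exu nexv; apply/negP => exy.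
have M := modR xuR.
have xuK : xu \in component e R xu by rewrite inE xuR connect0.
have xvK : xv \in component e R xu.
  by rewrite inE xvR; apply: connect1; rewrite /induced_rel /= exy xuR xvR.
have := M xu xv xuK xvK => /(congr1 (fun A : {set T} => u \in A)).
rewrite !inE (esym xu u) exu /=.
have -> : (u \in R) = false by apply/negP => /RnotC; rewrite uC.
move=> /= H; move: nexv; by rewrite esym -H.
Qed.

Lemma core (S : {set T}) : S \subset C -> connected_induced e S -> hits S ->
  (forall w, w \in S -> connected_induced e (S :\ w) -> ~ hits (S :\ w)) ->
  is_clique e S.
Proof.
move=> SC cS hS nc; apply: NNPP => ncl.
have [a [b [aS bS ab nab]]] : exists a b, [/\ a \in S, b \in S, a != b & ~~ e a b].
  apply: NNPP => H; apply: ncl => x y xS yS xy; apply: NNPP => nexy; apply: H.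
  by exists x, y; split => //; apply/negP.
have nb1 : b \notin ball S a 1.
  rewrite ballS ball0 !inE eq_sym (negbTE ab) /=; apply/negP => /andP[_ /existsP[z]].
  by rewrite inE => /andP[/eqP -> eab]; move: nab; rewrite eab.
have [m1 [v [m1p Sm1 vS nv]]] := far aS cS bS nb1.
have na1 : a \notin ball S v 1.
  apply/negP => /(ball1_sym vS aS) H; move: nv.
  by rewrite (subsetP (ball_mono S a m1p) v H).
have [m2 [u [m2p Sm2 uS nu]]] := far vS cS aS na1.
have [xv [xvR evxv pv]] := priv hS (nc v vS (noncut aS Sm1 vS nv)).
have [xu [xuR euxu pu]] := priv hS (nc u uS (noncut vS Sm2 uS nu)).
have uB := subsetP Sm2 u uS.
have neqS : forall q n, q \in ball S v n -> n <= m2 -> q != u.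
  move=> q n qB nm; apply/eqP => qu; move: nu; rewrite -qu.
  by rewrite (subsetP (ball_mono S v nm) q qB).
have inS : forall q n, q \in ball S v n -> q \in S.
  by move=> q n qB; exact: (subsetP (ball_sub n vS)).
case: m2 m2p Sm2 nu uB neqS => [//|[|n]] _ Sm2 nu uB neqS.
- have [q qB equ] := ball_pred uB nu.
  have nq0 : q \notin ball S v 0.
    apply/negP => q0; move: nu; rewrite (ball_edge q0 uS equ) //.
  have [z zB ezq] := ball_pred qB nq0.
  move: zB; rewrite ball0 inE => /eqP zv; subst z.
  have vu : v != u by apply: (neqS v 0) => //; rewrite ball0 inE.
  apply: (no_p5 (a := xu) (b := u) (c := q) (d := v) (g := xv) P5).
  + by rewrite esym.
  + by rewrite esym.
  + by rewrite esym.
  + done.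
  + by rewrite esym; apply: pu (inS q 1 qB) (neqS q 1 qB (leqnn 1)).
  + by rewrite esym; apply: pu vS vu.
  + apply: (priv_nonadj (u := u)) => //; first exact: (subsetP SC).
    by apply: (pv u uS); rewrite eq_sym.
  + by rewrite esym; apply: (ball_far (S := S) (r := v) (n := 0)) => //; rewrite ball0 inE.
  + by apply: (pv u uS); rewrite eq_sym.
  + apply: pv (inS q 1 qB) _; apply/eqP => qv; move: nq0; by rewrite qv ball0 inE eqxx.
- have [q2 [q2B nq2 eq2u]] := ball_pred2 vS uB nu.
  have [q3 [q3B nq3 eq3q2]] := ball_pred2 vS q2B nq2.
  have [q4 q4B eq4q3] := ball_pred q3B nq3.
  have q4B' : q4 \in ball S v n.+1 := subsetP (ball_mono S v (leqnSn n)) q4 q4B.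
  apply: (no_p5 (a := xu) (b := u) (c := q2) (d := q3) (g := q4) P5).
  + by rewrite esym.
  + by rewrite esym.
  + by rewrite esym.
  + by rewrite esym.
  + by rewrite esym; apply: pu (inS q2 _ q2B) (neqS q2 _ q2B (leqnn _)).
  + by rewrite esym; apply: pu (inS q3 _ q3B) (neqS q3 _ q3B (leqnSn _)).
  + by rewrite esym; apply: pu (inS q4 _ q4B) (neqS q4 _ q4B' (leqnSn _)).
  + by rewrite esym; apply: (ball_far (S := S) (r := v) (n := n.+1)).
  + by rewrite esym; apply: (ball_far (S := S) (r := v) (n := n.+1)).
  + rewrite esym; apply: (ball_far (S := S) (r := v) (n := n)) => //; exact: inS q2 _ q2B.
Qed.

Lemma clique_hit n : forall S : {set T}, #|S| <= n -> S \subset C ->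
  connected_induced e S -> hits S ->
  exists Q : {set T}, [/\ Q \subset C, is_clique e Q & hits Q].
Proof.
elim: n => [|n IH] S cardS SC cS hS.
  exists S; split => // x y xS; move: cardS; rewrite leqn0 => /eqP /cards0_eq S0.
  by move: xS; rewrite S0 inE.
case: (classic (exists w, [/\ w \in S, connected_induced e (S :\ w) & hits (S :\ w)])).
  move=> [w [wS cw hw]]; apply: (IH (S :\ w)) => //.
    by move: cardS; rewrite (cardsD1 w S) wS add1n ltnS.
  exact: subset_trans (subD1set S w) SC.
move=> H; exists S; split => //; apply: core => // w wS cw hw.
by apply: H; exists w.
Qed.
End Aux.

Unset Implicit Arguments.
Set Strict Implicit.

Theorem claim4p5 (T : finType) (e : rel T) (k : nat) (C D R : {set T}) :
  simple_graph e ->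
  P5_free e ->
  1 <= k ->
  connected_induced e C ->
  (forall Q : {set T}, Q \subset C -> is_clique e Q -> #|Q| <= k) ->
  D \subset C ->
  #|D| <= k.+1 ->
  (forall v, v \in C -> v \in D \/ exists2 d, d \in D & e d v) ->
  R \subset nbhd e C ->
  (forall x, x \in R -> is_module e (component e R x)) ->
  exists Dt : {set T},
    [/\ dominating_in e (R :|: C) Dt, D \subset Dt & #|Dt :\: D| <= maxn k.+1 3].
Proof.
move=> [esym eirr] P5 _ cC clq DC _ domD RN modR.
have hC : hits e R C.
  move=> x /(subsetP RN); rewrite inE => /andP[_ /existsP[u /andP[uC eux]]].
  by exists u.
have [Q [QC cQ hQ]] := clique_hit esym eirr P5 RN modR (leqnn #|C|) (subxx C) cC hC.
exists (D :|: Q); split.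
- split.
    apply/subsetP => x; rewrite !inE => /orP[/(subsetP DC)|/(subsetP QC)] ->;
    by rewrite orbT.
  move=> v; rewrite inE => /orP[vR|vC].
    have [z zQ ezv] := hQ v vR; right; exists z => //; by rewrite inE zQ orbT.
  case: (domD v vC) => [vD|[d dD edv]]; first by left; rewrite inE vD.
  by right; exists d => //; rewrite inE dD.
- exact: subsetUl.
- apply: leq_trans (leq_trans (clq Q QC cQ) (leq_trans (leqnSn k) (leq_maxl _ _))).
  apply: subset_leq_card; apply/subsetP => x; rewrite !inE.
  by case: (x \in D) => //= /orP[].
Qed.
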